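(* Let $F$ be a field of characteristic $\neq 2$ and $(V,q)$ a nondegenerate quadratic space over $F$. Let $\tau\in SO(V,q)$ be an involution, and let $W$ be the nondegenerate subspace of dimension $2r$ such that $\tau=-1|_W\oplus 1|_{W^\perp}$. Then $\tau$ lifts (under $\chi$) to an involution in $\Gamma^+(V,q)$ if and only if $\mathrm{disc}(W)=(-1)^r$, where $\mathrm{disc}(W)=\prod_{i=1}^{2r}q(v_i)$ for some orthogonal basis $\{v_1,\ldots,v_{2r}\}$ of $W$.
   Context: $C(V,q)=T(V)/\langle x\otimes x-q(x)\cdot1\rangle=C_0\oplus C_1$ is the Clifford algebra, $\Gamma(V,q)=\{u\in C(V,q)^\times: uVu^{-1}\subseteq V\}$ and $\Gamma^+(V,q)=\Gamma(V,q)\cap C_0(V,q)$. The vector representation $\chi:\Gamma^+(V,q)\to SO(V,q)$, $\chi(u)(x)=uxu^{-1}$, is surjective with kernel $F^*$. An involution is an element whose square is $1$. *)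

(* Defs.v *)
From HB Require Import structures.
From mathcomp Require Import all_boot all_order all_algebra.
Set Implicit Arguments.
Unset Strict Implicit.
Unset Printing Implicit Defensive.
Import Order.TTheory GRing.Theory.
Local Open Scope ring_scope.

Section QuadSpace.
Variables (F : fieldType) (n : nat).
Implicit Types (q : 'rV[F]_n -> F) (x y z : 'rV[F]_n).

Definition polar q x y : F := q (x + y) - q x - q y.

Definition is_quadratic_form q : Prop :=
  (forall (a : F) x, q (a *: x) = a ^+ 2 * q x) /\
  (forall x y z, polar q (x + y) z = polar q x z + polar q y z) /\
  (forall (a : F) x y, polar q (a *: x) y = a * polar q x y).

Definition quad_nondegenerate q : Prop :=
  forall x, (forall y, polar q x y = 0) -> x = 0.

(* tau (acting on row vectors by right multiplication) lies in SO(V,q) *)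
Definition in_SO q (tau : 'M[F]_n) : Prop :=
  (forall x, q (x *m tau) = q x) /\ \det tau = 1.

(* the subspace W (row space of the matrix W) is nondegenerate for q *)
Definition nondeg_subspace q (W : 'M[F]_n) : Prop :=
  forall w, (w <= W)%MS -> (forall w', (w' <= W)%MS -> polar q w w' = 0) -> w = 0.

Definition in_perp q (W : 'M[F]_n) x : Prop :=
  forall w, (w <= W)%MS -> polar q w x = 0.

(* disc(W) = d in F^*/F^*^2: for some orthogonal basis v_1..v_m (rows of B)
   of W, prod q(v_i) = d * c^2 with c <> 0 *)
Definition disc_eq q (W : 'M[F]_n) (m : nat) (d : F) : Prop :=
  exists B : 'M[F]_(m, n),
    [/\ row_free B, (B == W)%MS,
        (forall i j : 'I_m, i != j -> polar q (row i B) (row j B) = 0) &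
        exists c : F, c != 0 /\ \prod_(i < m) q (row i B) = d * c ^+ 2].

(* (C, iota) is a Clifford algebra of (V,q): iota linear, iota(x)^2 = q(x),
   and (C,iota) satisfies the universal property defining
   C(V,q) = T(V)/<x (x) x - q(x) 1>. *)
Definition is_clifford_algebra q (C : algType F) (iota : 'rV[F]_n -> C) : Prop :=
  [/\ (forall x y, iota (x + y) = iota x + iota y),
      (forall (a : F) x, iota (a *: x) = a *: iota x),
      (forall x, iota x * iota x = (q x)%:A) &
      forall (A : algType F) (f : 'rV[F]_n -> A),
        (forall x y, f (x + y) = f x + f y) ->
        (forall (a : F) x, f (a *: x) = a *: f x) ->
        (forall x, f x * f x = (q x)%:A) ->
        exists g : C -> A,
          [/\ (forall u v, g (u + v) = g u + g v),
              (forall (a : F) u, g (a *: u) = a *: g u),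
              (forall u v, g (u * v) = g u * g v),
              g 1 = 1 &
              (forall x, g (iota x) = f x) /\
              (forall g' : C -> A,
                 (forall u v, g' (u + v) = g' u + g' v) ->
                 (forall (a : F) u, g' (a *: u) = a *: g' u) ->
                 (forall u v, g' (u * v) = g' u * g' v) ->
                 g' 1 = 1 ->
                 (forall x, g' (iota x) = f x) ->
                 forall u, g' u = g u)]].

(* the even part C_0: the span of the products of an even number of vectors *)
Inductive even_part (C : algType F) (iota : 'rV[F]_n -> C) : C -> Prop :=
  | even_one : even_part iota 1
  | even_add u v : even_part iota u -> even_part iota v -> even_part iota (u + v)
  | even_scale (a : F) u : even_part iota u -> even_part iota (a *: u)
  | even_mul u x y : even_part iota u -> even_part iota (u * iota x * iota y).

Definition in_Gamma (C : algType F) (iota : 'rV[F]_n -> C) (u : C) : Prop :=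
  exists v : C, [/\ u * v = 1, v * u = 1 &
                    forall x, exists y, u * iota x * v = iota y].

Definition in_Gamma_plus (C : algType F) (iota : 'rV[F]_n -> C) (u : C) : Prop :=
  in_Gamma iota u /\ even_part iota u.

Definition chi_eq (C : algType F) (iota : 'rV[F]_n -> C) (u : C) (tau : 'M[F]_n) : Prop :=
  exists v : C, [/\ u * v = 1, v * u = 1 &
                    forall x, u * iota x * v = iota (x *m tau)].

End QuadSpace.

(* Main.v *)
Require Import Defs.
From HB Require Import structures.
From mathcomp Require Import all_boot all_order all_algebra.
From mathcomp Require Import ring.
From Stdlib Require Import Classical.
Set Implicit Arguments.
Unset Strict Implicit.
Unset Printing Implicit Defensive.
Import GRing.Theory.
Local Open Scope ring_scope.

Section Polar.
Variables (F : fieldType) (n : nat) (q : 'rV[F]_n -> F).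
Hypothesis Hq : is_quadratic_form q.

Lemma polarC x y : polar q x y = polar q y x.
Proof. rewrite /polar [x + y]addrC; ring. Qed.

Lemma polarDl x y z : polar q (x + y) z = polar q x z + polar q y z.
Proof. by case: Hq => _ [H _]; apply: H. Qed.

Lemma polarZl (a : F) x y : polar q (a *: x) y = a * polar q x y.
Proof. by case: Hq => _ [_ H]; apply: H. Qed.

Lemma polarDr x y z : polar q z (x + y) = polar q z x + polar q z y.
Proof. by rewrite polarC polarDl !(polarC _ z). Qed.

Lemma polarZr (a : F) x y : polar q y (a *: x) = a * polar q y x.
Proof. by rewrite polarC polarZl polarC. Qed.

Lemma qZ (a : F) x : q (a *: x) = a ^+ 2 * q x.
Proof. by case: Hq => H _; apply: H. Qed.

Lemma q0 : q 0 = 0.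
Proof. by rewrite -(scale0r (0 : 'rV_n)) qZ expr2 !mul0r. Qed.

Lemma polar0l y : polar q 0 y = 0.
Proof. by rewrite -(scale0r (0 : 'rV_n)) polarZl mul0r. Qed.

Lemma polar0r y : polar q y 0 = 0.
Proof. by rewrite polarC polar0l. Qed.

Lemma polarNl x y : polar q (- x) y = - polar q x y.
Proof. by rewrite -scaleN1r polarZl mulN1r. Qed.

Lemma polarBl x y z : polar q (x - y) z = polar q x z - polar q y z.
Proof. by rewrite polarDl polarNl. Qed.

Lemma polarNr x y : polar q y (- x) = - polar q y x.
Proof. by rewrite polarC polarNl polarC. Qed.

Lemma polarBr x y z : polar q z (x - y) = polar q z x - polar q z y.
Proof. by rewrite polarDr polarNr. Qed.

Lemma polar_suml I (r : seq I) (P : pred I) (G : I -> 'rV_n) y :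
  polar q (\sum_(i <- r | P i) G i) y = \sum_(i <- r | P i) polar q (G i) y.
Proof.
elim/big_rec2: _ => [|i a b _ <-]; first exact: polar0l.
by rewrite polarDl.
Qed.

Lemma polar_sumr I (r : seq I) (P : pred I) (G : I -> 'rV_n) y :
  polar q y (\sum_(i <- r | P i) G i) = \sum_(i <- r | P i) polar q y (G i).
Proof.
rewrite polarC polar_suml; apply: eq_bigr => i _; exact: polarC.
Qed.

Lemma polarxx x : polar q x x = 2%:R * q x.
Proof.
rewrite /polar -{1 2}(scale1r x) -scalerDl qZ; ring.
Qed.

End Polar.
Section Cliff.
Variables (F : fieldType) (n : nat) (q : 'rV[F]_n -> F).
Hypothesis Hq : is_quadratic_form q.
Variables (C : algType F) (iota : 'rV[F]_n -> C).
Hypothesis iotaD : forall x y, iota (x + y) = iota x + iota y.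
Hypothesis iotaZ : forall (a : F) x, iota (a *: x) = a *: iota x.
Hypothesis iotaQ : forall x, iota x * iota x = (q x)%:A.

Lemma iota0 : iota 0 = 0.
Proof. by rewrite -(scale0r (0 : 'rV_n)) iotaZ scale0r. Qed.

Lemma iotaN x : iota (- x) = - iota x.
Proof. by rewrite -scaleN1r iotaZ scaleN1r. Qed.

Lemma iotaB x y : iota (x - y) = iota x - iota y.
Proof. by rewrite iotaD iotaN. Qed.

Lemma iota_sum I (r : seq I) (P : pred I) (G : I -> 'rV_n) :
  iota (\sum_(i <- r | P i) G i) = \sum_(i <- r | P i) iota (G i).
Proof.
elim/big_rec2: _ => [|i a b _ <-]; first exact: iota0.
by rewrite iotaD.
Qed.

Lemma zmodAC (V : zmodType) (X s t Y : V) : X + s + (t + Y) - X - Y = s + t.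
Proof. apply/eqP; rewrite !subr_eq; apply/eqP. by rewrite [RHS]addrC !addrA. Qed.

Lemma anticomm x y : iota x * iota y + iota y * iota x = (polar q x y)%:A.
Proof.
have := iotaQ (x + y); rewrite iotaD mulrDl !mulrDr !iotaQ /polar => H.
by rewrite !scalerBl -H zmodAC.
Qed.

Lemma reflect_move y v : q v != 0 ->
  iota y * iota v = iota v * iota ((polar q y v / q v) *: v - y).
Proof.
move=> nz; rewrite iotaB iotaZ mulrBr -scalerAr iotaQ scalerA divfK //.
by rewrite -anticomm addrK.
Qed.

Lemma vecid (s c : F) (v x S : 'rV[F]_n) :
  (s * c) *: v - s *: (x - S) = - (s *: (x - (S + c *: v))).
Proof. rewrite !scalerBr scalerDr scalerA opprB opprD opprK.
by rewrite [RHS]addrC addrA [_ + s *: S]addrC. Qed.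

Variables (vf : nat -> 'rV[F]_n) (m : nat).
Hypothesis orth : forall i j, (i < m)%N -> (j < m)%N -> i != j ->
  polar q (vf i) (vf j) = 0.
Hypothesis nzq : forall i, (i < m)%N -> q (vf i) != 0.

Definition cf i x := polar q x (vf i) / q (vf i).
Definition P k := \prod_(i < k) iota (vf i).

Lemma polar_partial k x : (k < m)%N ->
  polar q (\sum_(i < k) cf i x *: vf i) (vf k) = 0.
Proof.
move=> km; rewrite (polar_suml Hq) big1 // => i _.
rewrite (polarZl Hq) orth ?mulr0 //; first exact: ltn_trans (ltn_ord i) km.
by rewrite neq_ltn ltn_ord.
Qed.

Lemma conjP k x : (k <= m)%N ->
  iota x * P k = P k * iota ((-1) ^+ k *: (x - \sum_(i < k) cf i x *: vf i)).
Proof.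
elim: k => [|k IH] km.
  by rewrite /P !big_ord0 subr0 expr0 scale1r mul1r mulr1.
rewrite /P big_ord_recr /= -/(P k) mulrA IH ?(ltnW km) // -mulrA.
rewrite (reflect_move _ (nzq km)) mulrA; congr (_ * iota _).
rewrite (polarZl Hq) (polarBl Hq) polar_partial // subr0.
rewrite big_ord_recr /= exprS mulN1r scaleNr -vecid.
by rewrite /cf mulrA.
Qed.

Lemma moveP k j : (k <= j)%N -> (j < m)%N ->
  iota (vf j) * P k = (-1) ^+ k *: (P k * iota (vf j)).
Proof.
move=> kj jm; rewrite conjP ?(leq_trans kj (ltnW jm)) //.
rewrite big1 ?subr0 ?iotaZ ?scalerAr // => i _.
have ij : (i < j)%N := leq_trans (ltn_ord i) kj.
rewrite /cf orth ?mul0r ?scale0r //; first exact: ltn_trans ij jm.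
by rewrite neq_ltn ij orbT.
Qed.

Lemma P2S k : P (2 * k.+1) = P (2 * k) * iota (vf (2 * k)) * iota (vf (2 * k).+1).
Proof.
have -> : (2 * k.+1 = (2 * k).+2)%N by rewrite mulnS.
by rewrite /P big_ord_recr big_ord_recr /=.
Qed.

Lemma sqrP k : (2 * k <= m)%N ->
  P (2 * k) * P (2 * k) = ((-1) ^+ k * \prod_(i < 2 * k) q (vf i))%:A.
Proof.
elim: k => [|k IH] km.
  by rewrite /P muln0 !big_ord0 mulr1 expr0 mulr1 scale1r.
have hk : ((2 * k).+1 < m)%N by move: km; rewrite mulnS.
have hk0 : (2 * k < m)%N by apply: ltnW.
set a := iota (vf (2 * k)); set b := iota (vf (2 * k).+1).
have ev : (-1) ^+ (2 * k) = 1 :> F by rewrite exprM sqrrN !expr1n.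
have Pa : a * P (2 * k) = P (2 * k) * a by rewrite moveP // ev scale1r.
have Pb : b * P (2 * k) = P (2 * k) * b by rewrite moveP // ev scale1r.
rewrite P2S -!mulrA [b * (P _ * _)]mulrA Pb -mulrA [a * (P _ * _)]mulrA Pa.
rewrite -!mulrA !mulrA IH ?(ltnW hk0) //.
have ba : b * a = - (a * b).
  apply/eqP; rewrite -addr_eq0 addrC anticomm orth ?scale0r //.
  by rewrite neq_ltn ltnSn.
rewrite -!mulrA [b * (a * b)]mulrA ba mulNr mulrN.
rewrite !mulrA -mulrA !iotaQ.
have -> : (2 * k.+1 = (2 * k).+2)%N by rewrite mulnS.
rewrite big_ord_recr big_ord_recr /= exprS.
rewrite -scalerAl mul1r scalerN -scalerAl mul1r !scalerA -scaleNr.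
congr (_ *: 1); ring.
Qed.

Lemma evenP k : even_part iota (P (2 * k)).
Proof.
elim: k => [|k IH]; first by rewrite /P muln0 big_ord0; exact: even_one.
by rewrite P2S; apply: even_mul.
Qed.

End Cliff.
Section Tau.
Variables (F : fieldType) (n : nat) (q : 'rV[F]_n -> F).
Hypothesis Hq : is_quadratic_form q.
Hypothesis two : (2%:R : F) != 0.
Variables (m : nat) (B : 'M[F]_(m, n)) (tau W : 'M[F]_n).
Hypothesis orthB : forall i j : 'I_m, i != j -> polar q (row i B) (row j B) = 0.
Hypothesis nzB : forall i : 'I_m, q (row i B) != 0.
Hypothesis BW : (B == W)%MS.
Hypothesis HW : forall w : 'rV[F]_n, (w <= W)%MS -> w *m tau = - w.
Hypothesis Hperp : forall x, in_perp q W x -> x *m tau = x.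

Lemma tau_formula x :
  x *m tau = x - \sum_(i < m) (polar q x (row i B) / q (row i B)) *: row i B.
Proof.
have /andP [BsW WsB] := BW.
set c := fun i : 'I_m => polar q x (row i B) / q (row i B).
set S := \sum_(i < m) (c i / 2%:R) *: row i B.
have SW : (S <= W)%MS.
  apply: submx_trans BsW; apply: summx_sub => i _.
  by apply: scalemx_sub; apply: row_sub.
have pS : forall i : 'I_m, polar q S (row i B) = polar q x (row i B).
  move=> i; rewrite (polar_suml Hq) (bigD1 i) //= big1 ?addr0.
    rewrite (polarZl Hq) (polarxx Hq) /c; field.
    by rewrite two nzB.
  by move=> j ji; rewrite (polarZl Hq) orthB ?mulr0.
have yperp : in_perp q W (x - S).
  move=> w /(submx_trans)/(_ WsB)/submxP [a ->].
  rewrite mulmx_sum_row (polar_suml Hq) big1 // => i _.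
  by rewrite (polarZl Hq) polarC (polarBl Hq) pS subrr mulr0.
rewrite -{1}(subrK S x) mulmxDl Hperp // HW // -addrA -opprD; congr (x - _).
rewrite /S -big_split /=; apply: eq_bigr => i _; rewrite -scalerDl.
congr (_ *: _); rewrite /c; field; by rewrite nzB two.
Qed.

End Tau.
Section OrthBasis.
Variables (F : fieldType) (n : nat) (q : 'rV[F]_n -> F).
Hypothesis Hq : is_quadratic_form q.
Hypothesis two : (2%:R : F) != 0.

Definition pv (y : 'rV[F]_n) : 'cV[F]_n := \col_j polar q (delta_mx 0 j) y.

Lemma pvE x y : (x *m pv y) 0 0 = polar q x y.
Proof.
rewrite {2}(row_sum_delta x) (polar_suml Hq) mxE; apply: eq_bigr => j _.
by rewrite mxE (polarZl Hq).
Qed.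

Lemma sub_ker_pv x y : (x <= kermx (pv y))%MS = (polar q x y == 0).
Proof.
rewrite sub_kermx -pvE; apply/eqP/eqP => [->|H]; first by rewrite mxE.
by rewrite [x *m _]mx11_scalar H raddf0.
Qed.

Lemma orth_basis k : forall U : 'M[F]_n, nondeg_subspace q U -> \rank U = k ->
  exists B : 'M[F]_(k, n), [/\ (B == U)%MS,
    forall i j : 'I_k, i != j -> polar q (row i B) (row j B) = 0 &
    forall i, q (row i B) != 0].
Proof.
elim: k => [|k IH] U ndU rU.
  exists 0; split; last by case.
    move/eqP: rU; rewrite mxrank_eq0 => /eqP ->; apply/andP; split; exact: sub0mx.
  by case.
have [v [vU qv]] : exists v, (v <= U)%MS /\ q v != 0.
  case: (classic (exists v, (v <= U)%MS /\ q v != 0)) => // H.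
  have Hz : forall v, (v <= U)%MS -> q v = 0.
    by move=> v vU; apply/eqP/negPn/negP => nz; apply: H; exists v.
  have U0 : U = 0.
    apply/row_matrixP => i; rewrite row0; apply: ndU; first exact: row_sub.
    move=> w' w'U; rewrite /polar !Hz ?subrr ?row_sub //.
    by rewrite addmx_sub ?row_sub.
  by move: rU; rewrite U0 mxrank0.
have pvv : polar q v v != 0 by rewrite (polarxx Hq) mulf_neq0.
set U' := (U :&: kermx (pv v))%MS.
have U'U : (U' <= U)%MS := capmxSl _ _.
have perpU' : forall y, (y <= U')%MS -> polar q y v = 0.
  by move=> y; rewrite sub_capmx sub_ker_pv => /andP [_ /eqP].
set t := fun x => polar q x v / polar q v v.
have projU' : forall x, (x <= U)%MS -> (x - t x *: v <= U')%MS.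
  move=> x xU; rewrite sub_capmx sub_ker_pv (polarBl Hq) (polarZl Hq).
  rewrite /t divfK // subrr eqxx andbT.
  by rewrite addmx_sub // -scaleNr scalemx_sub.
have ndU' : nondeg_subspace q U'.
  move=> w wU' Hw; apply: ndU; first exact: submx_trans U'U.
  move=> z zU; rewrite -(subrK (t z *: v) z) (polarDr Hq) (polarZr Hq).
  by rewrite Hw ?projU' // perpU' // mulr0 addr0.
have UU'v : (U <= U' + v)%MS.
  apply/row_subP => i; rewrite -(subrK (t (row i U) *: v) (row i U)).
  by apply: addmx_sub_adds; [apply: projU'; exact: row_sub | exact: scalemx_sub].
have U'vU : (U' + v <= U)%MS by rewrite addsmx_sub U'U vU.
have cap0 : (U' :&: v)%MS = 0.
  apply/eqP; rewrite -submx0; apply/row_subP => i.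
  have r1 : (row i (U' :&: v)%MS <= U')%MS := submx_trans (row_sub _ _) (capmxSl _ _).
  have /sub_rVP [a ra] : (row i (U' :&: v)%MS <= v)%MS :=
    submx_trans (row_sub _ _) (capmxSr _ _).
  have := perpU' _ r1; rewrite ra (polarZl Hq) => /eqP; rewrite mulf_eq0 (negPf pvv).
  by rewrite orbF => /eqP ->; rewrite scale0r sub0mx.
have rU' : \rank U' = k.
  have : \rank U = \rank (U' + v)%MS.
    by apply/eqmx_rank/andP; split.
  rewrite mxrank_disjoint_sum // rank_rV rU.
  have -> : (v != 0) by apply: contraNneq qv => ->; rewrite (q0 Hq).
  by rewrite addn1 => -[].
have [B' [B'U' oB' nB']] := IH U' ndU' rU'.
have /andP [B'sU' U'sB'] := B'U'.
set B := \matrix_(i < k.+1) (if unlift ord0 i is Some j then row j B' else v).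
have rB0 : row ord0 B = v by rewrite rowK unlift_none.
have rBl : forall j, row (lift ord0 j) B = row j B' by move=> j; rewrite rowK liftK.
have vperp : forall j, polar q (row j B') v = 0.
  by move=> j; apply: perpU'; apply: submx_trans B'sU'; exact: row_sub.
exists B; split.
- apply/andP; split.
    apply/row_subP => i; case: (unliftP ord0 i) => [j|] ->; last by rewrite rB0.
    rewrite rBl; apply: submx_trans U'U; apply: submx_trans B'sU'; exact: row_sub.
  apply: submx_trans UU'v _; rewrite addsmx_sub; apply/andP; split.
    apply: submx_trans U'sB' _; apply/row_subP => j; rewrite -rBl; exact: row_sub.
  rewrite -rB0; exact: row_sub.
- move=> i j; case: (unliftP ord0 i) => [i'|] ->; case: (unliftP ord0 j) => [j'|] ->.
  + by rewrite !rBl => ne; apply: oB'; apply: contraNneq ne => ->.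
  + by rewrite rBl rB0 => _; apply: vperp.
  + by rewrite rBl rB0 => _; rewrite polarC; apply: vperp.
  + by rewrite eqxx.
- move=> i; case: (unliftP ord0 i) => [i'|] ->; first by rewrite rBl.
  by rewrite rB0.
Qed.
End OrthBasis.
Section Model.
Variables (F : fieldType) (n : nat) (a : 'I_n -> F).
Hypothesis anz : forall i, a i != 0.
Hypothesis two : (2%:R : F) != 0.

Definition N := #|{: {set 'I_n}}|.-1.
Lemma cardT : #|{: {set 'I_n}}| = N.+1.
Proof. by rewrite /N prednK //; apply/card_gt0P; exists set0. Qed.

Definition vl (i : 'I_N.+1) : {set 'I_n} := enum_val (cast_ord (esym cardT) i).
Definition ix (S : {set 'I_n}) : 'I_N.+1 := cast_ord cardT (enum_rank S).
Lemma vlK : cancel vl ix.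
Proof. by move=> i; rewrite /vl /ix enum_valK cast_ordKV. Qed.
Lemma ixK : cancel ix vl.
Proof. by move=> S; rewrite /vl /ix cast_ordK enum_rankK. Qed.

Lemma sumvl (G : {set 'I_n} -> F) : \sum_(c : 'I_N.+1) G (vl c) = \sum_S G S.
Proof.
rewrite (reindex vl) //; exists ix => x _; [exact: vlK | exact: ixK].
Qed.

Definition mk (f : {set 'I_n} -> {set 'I_n} -> F) : 'M[F]_N.+1 :=
  \matrix_(i, j) f (vl i) (vl j).

Lemma mkE f S T : mk f (ix S) (ix T) = f S T.
Proof. by rewrite mxE !ixK. Qed.

Lemma mk_eta (Z : 'M[F]_N.+1) : Z = mk (fun S T => Z (ix S) (ix T)).
Proof. by apply/matrixP => i j; rewrite mxE !vlK. Qed.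

Lemma mulmk f g : mk f *m mk g = mk (fun S U => \sum_T f S T * g T U).
Proof.
apply/matrixP => i j; rewrite !mxE -sumvl; apply: eq_bigr => c _.
by rewrite !mxE.
Qed.

Lemma addmk f g : mk f + mk g = mk (fun S U => f S U + g S U).
Proof. by apply/matrixP => i j; rewrite !mxE. Qed.

Lemma scalmk (c : F) : c%:M = mk (fun S U => (S == U)%:R * c).
Proof.
apply/matrixP => i j; rewrite !mxE (inj_eq (can_inj vlK)).
by case: eqP; rewrite ?mulr1n ?mulr0n ?mul1r ?mul0r.
Qed.

Definition tog (i : 'I_n) (S : {set 'I_n}) := [set k | (k == i) (+) (k \in S)].
Lemma in_tog i S k : (k \in tog i S) = (k == i) (+) (k \in S).
Proof. by rewrite inE. Qed.
Lemma togK i : involutive (tog i).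
Proof. by move=> S; apply/setP => k; rewrite !in_tog addbA addbb. Qed.
Lemma togC i j S : tog i (tog j S) = tog j (tog i S).
Proof. by apply/setP => k; rewrite !in_tog addbCA. Qed.
Lemma tog_eq i S T : (S == tog i T) = (T == tog i S).
Proof.
by apply/eqP/eqP => ->; rewrite togK.
Qed.

Lemma card_tog i S : #|tog i S| = if i \in S then #|S|.-1 else #|S|.+1.
Proof.
case: ifP => iS.
  have -> : tog i S = S :\ i.
    by apply/setP => k; rewrite in_tog !inE; case: eqP => // ->; rewrite iS.
  by rewrite (cardsD1 i S) iS.
have -> : tog i S = i |: S.
  by apply/setP => k; rewrite in_tog !inE; case: eqP => // ->; rewrite iS.
by rewrite cardsU1 iS.
Qed.

Lemma sign_tog i S : (-1) ^+ #|tog i S| = - (-1) ^+ #|S| :> F.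
Proof.
rewrite card_tog; case: ifP => iS; last by rewrite exprS mulN1r.
rewrite (cardsD1 i S) iS /= exprS mulN1r opprK //.
Qed.

Lemma odd_tog i S : odd #|tog i S| = ~~ odd #|S|.
Proof.
rewrite card_tog; case: ifP => iS //=.
by rewrite (cardsD1 i S) iS /= negbK.
Qed.

Lemma eq_mk f g : (forall S U, f S U = g S U) -> mk f = mk g.
Proof. by move=> H; apply/matrixP => i j; rewrite !mxE H. Qed.

Definition sE (i : 'I_n) (S : {set 'I_n}) : F := (-1) ^+ #|[set k in S | (k < i)%N]|.
Definition sR (i : 'I_n) (S : {set 'I_n}) : F := (-1) ^+ #|[set k in S | (i < k)%N]|.
Definition wt (i : 'I_n) (S : {set 'I_n}) : F := if i \in S then a i else 1.

Lemma sE_tog i j U : sE i (tog j U) = (-1) ^+ (j < i)%N * sE i U.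
Proof.
rewrite /sE; case: ltnP => ji.
  have -> : [set k in tog j U | (k < i)%N] = tog j [set k in U | (k < i)%N].
    apply/setP => k; rewrite !(inE, in_tog); case: (eqVneq k j) => [->|] //=.
    by rewrite ji !andbT.
  by rewrite sign_tog expr1 mulN1r.
have -> : [set k in tog j U | (k < i)%N] = [set k in U | (k < i)%N].
  apply/setP => k; rewrite !(inE, in_tog); case: (eqVneq k j) => [->|] //=.
  by rewrite ltnNge ji !andbF.
by rewrite expr0 mul1r.
Qed.

Lemma sR_tog i j U : sR i (tog j U) = (-1) ^+ (i < j)%N * sR i U.
Proof.
rewrite /sR; case: ltnP => ji.
  have -> : [set k in tog j U | (i < k)%N] = tog j [set k in U | (i < k)%N].
    apply/setP => k; rewrite !(inE, in_tog); case: (eqVneq k j) => [->|] //=.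
    by rewrite ji !andbT.
  by rewrite sign_tog expr1 mulN1r.
have -> : [set k in tog j U | (i < k)%N] = [set k in U | (i < k)%N].
  apply/setP => k; rewrite !(inE, in_tog); case: (eqVneq k j) => [->|] //=.
  by rewrite ltnNge ji !andbF.
by rewrite expr0 mul1r.
Qed.

Lemma sgn2 k : (-1) ^+ k * (-1) ^+ k = 1 :> F.
Proof. by rewrite -expr2 -exprM mulnC exprM sqrrN !expr1n. Qed.

Lemma wt_tog i j U : i != j -> wt i (tog j U) = wt i U.
Proof. by move=> ij; rewrite /wt in_tog (negPf ij). Qed.

Lemma wt_togg i U : wt i (tog i U) * wt i U = a i.
Proof. by rewrite /wt in_tog eqxx; case: (i \in U) => /=; rewrite ?mulr1 ?mul1r. Qed.

Lemma wt_swap i j U : wt i (tog j U) * wt j U = wt j (tog i U) * wt i U.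
Proof.
case: (eqVneq i j) => [->//|ij]; rewrite wt_tog // wt_tog 1?eq_sym //.
by rewrite mulrC.
Qed.

Definition Ecoef i S T := (S == tog i T)%:R * (sE i T * wt i T).
Definition Rcoef i S T := (S == tog i T)%:R * (sR i T * wt i T).
Definition E i := mk (Ecoef i).
Definition R i := mk (Rcoef i).

Lemma sum_right (f : {set 'I_n} -> F) j (h : F) U :
  \sum_T f T * ((T == tog j U)%:R * h) = f (tog j U) * h.
Proof.
rewrite (bigD1 (tog j U)) //= big1 ?addr0 ?eqxx ?mul1r // => T /negPf ->.
by rewrite mul0r mulr0.
Qed.

Lemma sum_left (g : {set 'I_n} -> F) i (h : {set 'I_n} -> F) S :
  \sum_T ((S == tog i T)%:R * h T) * g T = h (tog i S) * g (tog i S).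
Proof.
rewrite (bigD1 (tog i S)) //= big1 ?addr0 ?togK ?eqxx ?mul1r // => T.
by rewrite tog_eq => /negPf ->; rewrite !mul0r.
Qed.

Lemma aux2 (X s w1 w2 : F) : s * s = 1 ->
  X * (s * w1) * (s * w2) + X * (s * w1) * (s * w2) = X * (2%:R * (w1 * w2)).
Proof.
move=> ss; transitivity (X * (s * s) * (2%:R * (w1 * w2))); first ring.
by rewrite ss mulr1.
Qed.

Lemma EE i j : E i *m E j + E j *m E i = (if i == j then 2%:R * a i else 0)%:M.
Proof.
rewrite !mulmk addmk scalmk; apply: eq_mk => S U.
rewrite /Ecoef !sum_right; case: (eqVneq i j) => [<-|ij].
  rewrite togK sE_tog ltnn expr0 mul1r -(wt_togg i U).
  by apply: aux2; apply: sgn2.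
rewrite togC !sE_tog !wt_tog // 1?eq_sym // mulr0.
have -> : (-1) ^+ (i < j)%N = - (-1) ^+ (j < i)%N :> F.
  by case: (ltngtP i j) ij => [_ _|_ _|/val_inj ->];
    rewrite ?expr0 ?expr1 ?opprK ?eqxx.
ring.
Qed.

Lemma ER i j : E i *m R j = R j *m E i.
Proof.
rewrite !mulmk; apply: eq_mk => S U.
rewrite /Ecoef /Rcoef !sum_right togC sE_tog sR_tog.
have W := wt_swap i j U.
transitivity ((S == tog j (tog i U))%:R * (-1) ^+ (j < i)%N * sE i U * sR j U *
  (wt i (tog j U) * wt j U)); first ring.
by rewrite W; ring.
Qed.

Definition par (s : bool) (Z : 'M[F]_N.+1) :=
  forall S T, Z (ix S) (ix T) != 0 -> odd #|S| = s (+) odd #|T|.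

Lemma parE i : par true (E i).
Proof.
move=> S T; rewrite mkE /Ecoef; have [-> _|ne] := eqVneq S (tog i T).
  by rewrite odd_tog.
by rewrite mul0r eqxx.
Qed.

Lemma par_add s Z Y : par s Z -> par s Y -> par s (Z + Y).
Proof.
move=> HZ HY S T; rewrite mxE; case: (eqVneq (Z (ix S) (ix T)) 0) => [z0|nz _].
  by rewrite z0 add0r; apply: HY.
exact: HZ.
Qed.

Lemma par_scale s c Z : par s Z -> par s (c *: Z).
Proof. by move=> HZ S T; rewrite mxE mulf_eq0 negb_or => /andP [_]; apply: HZ. Qed.

Lemma par0 s : par s 0.
Proof. by move=> S T; rewrite mxE eqxx. Qed.

Lemma par1 : par false 1%:M.
Proof.
move=> S T; rewrite mxE (inj_eq (can_inj ixK)); have [->//|ne] := eqVneq S T.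
by rewrite mulr0n eqxx.
Qed.

Lemma par_mul s1 s2 Z Y : par s1 Z -> par s2 Y -> par (s1 (+) s2) (Z *m Y).
Proof.
move=> HZ HY S T; rewrite mxE => nz.
have [c cnz] : exists c, Z (ix S) c * Y c (ix T) != 0.
  apply/existsP; apply: contraR nz => /existsPn H.
  by apply/eqP; apply: big1 => c _; apply/eqP/negbNE/H.
move: cnz; rewrite mulf_eq0 negb_or -(vlK c) => /andP [h1 h2].
by rewrite (HZ _ _ h1) (HY _ _ h2) addbA.
Qed.

Lemma par_sum s k (G : 'I_k -> 'M[F]_N.+1) : (forall i, par s (G i)) ->
  par s (\sum_i G i).
Proof.
move=> H; apply: (big_ind (par s)); [exact: par0 | exact: par_add | by move=> i _].
Qed.

Lemma sEsR i (T : {set 'I_n}) : i \in T -> sE i T * sR i T = - (-1) ^+ #|T|.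
Proof.
move=> iT; rewrite /sE /sR -exprD.
have Hd : [set k in T | (k < i)%N] :&: [set k in T | (i < k)%N] = set0.
  apply/setP => k; rewrite !inE; apply/negbTE; apply/negP => /andP [/andP [_ h1] /andP [_ h2]].
  by move: (ltn_trans h1 h2); rewrite ltnn.
have Hu : [set k in T | (k < i)%N] :|: [set k in T | (i < k)%N] = T :\ i.
  apply/setP => k; rewrite !inE -andb_orr andbC; congr (_ && _).
  by rewrite -neq_ltn.
have -> : (#|[set k in T | (k < i)%N]| + #|[set k in T | (i < k)%N]| = #|T :\ i|)%N.
  by rewrite -Hu cardsU Hd cards0 subn0.
by rewrite [in RHS](cardsD1 i T) iT exprS mulN1r opprK.
Qed.

Lemma sign_nz k : (-1) ^+ k != 0 :> F.
Proof. by rewrite expf_neq0 // oppr_eq0 oner_eq0. Qed.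

Lemma sE_nz i T : sE i T != 0.
Proof. exact: sign_nz. Qed.

Lemma wt_nz i T : wt i T != 0.
Proof. by rewrite /wt; case: ifP => _; rewrite ?anz ?oner_eq0. Qed.

Lemma sE0 i : sE i set0 = 1.
Proof.
rewrite /sE; have -> : [set k in (set0 : {set 'I_n}) | (k < i)%N] = set0.
  by apply/setP => k; rewrite !inE.
by rewrite cards0 expr0.
Qed.

Lemma sR0 i : sR i set0 = 1.
Proof.
rewrite /sR; have -> : [set k in (set0 : {set 'I_n}) | (i < k)%N] = set0.
  by apply/setP => k; rewrite !inE.
by rewrite cards0 expr0.
Qed.

Lemma wt0 i : wt i set0 = 1.
Proof. by rewrite /wt inE. Qed.

Lemma scalar_model Z : par false Z -> (forall i, Z *m E i = E i *m Z) ->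
  (forall i, Z *m R i = R i *m Z) -> Z = (Z (ix set0) (ix set0))%:M.
Proof.
move=> pZ HEi HRi.
set zz := fun S T => Z (ix S) (ix T).
have HE : forall i S U, zz S (tog i U) * (sE i U * wt i U) =
    sE i (tog i S) * wt i (tog i S) * zz (tog i S) U.
  move=> i S U; move: (HEi i); rewrite [Z]mk_eta /E !mulmk.
  move=> /(congr1 (fun M : 'M[F]_N.+1 => M (ix S) (ix U))); rewrite !mkE.
  by rewrite /Ecoef sum_right sum_left.
have HR : forall i S U, zz S (tog i U) * (sR i U * wt i U) =
    sR i (tog i S) * wt i (tog i S) * zz (tog i S) U.
  move=> i S U; move: (HRi i); rewrite [Z]mk_eta /R !mulmk.
  move=> /(congr1 (fun M : 'M[F]_N.+1 => M (ix S) (ix U))); rewrite !mkE.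
  by rewrite /Rcoef sum_right sum_left.
have St1 : forall i T, (sE i T - sR i T) * wt i T * zz T set0 = 0.
  move=> i T; have h1 := HE i (tog i T) set0; have h2 := HR i (tog i T) set0.
  rewrite togK sE0 sR0 wt0 in h1 h2. by rewrite !mulrBl -h1 -h2 subrr.
have Z0 : forall T, T != set0 -> zz T set0 = 0.
  move=> T /set0Pn [i iT]; case oT: (odd #|T|).
    apply/eqP; apply: contraTT oT => nz; by rewrite (pZ _ _ nz) cards0.
  have hsr : sR i T = - sE i T.
    have := sEsR iT; rewrite -signr_odd oT expr0 => h.
    by rewrite -[sR i T]mul1r -(sgn2 #|[set k in T | (k < i)%N]|) -mulrA -/(sE i T) h mulrN1.
  move/eqP: (St1 i T); rewrite hsr opprK -mulr2n -mulr_natr !mulf_eq0.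
  by rewrite (negPf (sE_nz _ _)) (negPf two) (negPf (wt_nz _ _)) /= => /eqP.
have base : forall S, zz S set0 = (S == set0)%:R * zz set0 set0.
  move=> S; case: (eqVneq S set0) => [->|ne]; first by rewrite mul1r.
  by rewrite Z0 // mul0r.
have Z1 : forall k (T S : {set 'I_n}), (#|T| <= k)%N -> zz S T = (S == T)%:R * zz set0 set0.
  elim=> [|k IH] T S.
    by rewrite leqn0 cards_eq0 => /eqP ->; apply: base.
  move=> Tk; case: (eqVneq T set0) => [->|/set0Pn [i iT]]; first exact: base.
  set U := tog i T.
  have UT : tog i U = T by rewrite togK.
  have wU : wt i U = 1 by rewrite /wt in_tog eqxx iT.
  have cU : (#|U| <= k)%N.
    by rewrite card_tog iT -ltnS prednK //; apply/card_gt0P; exists i.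
  have := HE i S U; rewrite UT (IH U (tog i S) cU) wU mulr1.
  case: (eqVneq S T) => [->|ne].
    rewrite -/U eqxx wU /= !mulr1n !mul1r mulr1 mulrC => /(mulfI (sE_nz i U)) ->.
    by [].
  have -> : (tog i S == U) = false.
    by apply/negbTE; apply: contra ne => /eqP /(can_inj (togK i)) ->.
  have -> : (false%:R : F) = 0 by [].
  rewrite !mul0r mulr0 => /eqP; rewrite mulf_eq0 (negPf (sE_nz _ _)) orbF.
  by move/eqP.
rewrite [LHS]mk_eta scalmk; apply: eq_mk => S U; exact: Z1 (leqnn _).
Qed.


Lemma sqr_lin (c : 'I_n -> F) :
  (\sum_i c i *: E i) *m (\sum_i c i *: E i) = (\sum_i c i ^+ 2 * a i)%:M.
Proof.
set D := _ *m _.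
have HD : D = \sum_i \sum_j (c i * c j) *: (E i *m E j).
  rewrite /D mulmx_suml; apply: eq_bigr => i _; rewrite mulmx_sumr.
  by apply: eq_bigr => j _; rewrite -scalemxAl -scalemxAr scalerA.
have HD' : D = \sum_i \sum_j (c i * c j) *: (E j *m E i).
  rewrite HD exchange_big /=; apply: eq_bigr => i _; apply: eq_bigr => j _.
  by rewrite mulrC.
have H2 : D + D = ((\sum_i c i ^+ 2 * a i) * 2%:R)%:M.
  rewrite [X in X + _]HD [X in _ + X]HD' -big_split /= mulr_suml.
  rewrite raddf_sum /=; apply: eq_bigr => i _; rewrite -big_split /=.
  rewrite (bigD1 i) //= big1 ?addr0.
    by rewrite -scalerDr EE eqxx -scalemx1 scalerA scalemx1; congr _%:M; ring.
  by move=> j ji; rewrite -scalerDr EE eq_sym (negPf ji) -scalemx1 scale0r scaler0.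
have -> : D = 2%:R^-1 *: (D + D) by rewrite -mulr2n -scaler_nat scalerA mulVf // scale1r.
by rewrite H2 -scalemx1 scalerA scalemx1 mulrCA mulVf // mulr1.
Qed.

Lemma par_lin (c : 'I_n -> F) : par true (\sum_i c i *: E i).
Proof. by apply: par_sum => i; apply: par_scale; apply: parE. Qed.

Lemma R_lin (c : 'I_n -> F) j :
  (\sum_i c i *: E i) *m R j = R j *m (\sum_i c i *: E i).
Proof.
rewrite mulmx_suml mulmx_sumr; apply: eq_bigr => i _.
by rewrite -scalemxAl -scalemxAr ER.
Qed.

End Model.

Lemma even_mulr (F : fieldType) (n : nat) (C : algType F) (iota : 'rV[F]_n -> C) u v :
  even_part iota u -> even_part iota v -> even_part iota (u * v).
Proof.
move=> eu; elim=> [|x y _ ex _ ey|b y _ ey|y x1 x2 _ ey].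
- by rewrite mulr1.
- by rewrite mulrDr; apply: even_add.
- by rewrite -scalerAr; apply: even_scale.
- by rewrite !mulrA; apply: even_mul.
Qed.

Lemma wfacts (F : fieldType) (n : nat) (q : 'rV[F]_n -> F)
  (C : algType F) (iota : 'rV[F]_n -> C) (tau W : 'M[F]_n) (r : nat)
  (B : 'M[F]_(2 * r, n)) :
  (2%:R : F) != 0 -> is_quadratic_form q ->
  (forall x y, iota (x + y) = iota x + iota y) ->
  (forall (a : F) x, iota (a *: x) = a *: iota x) ->
  (forall x, iota x * iota x = (q x)%:A) ->
  (forall w : 'rV[F]_n, (w <= W)%MS -> w *m tau = - w) ->
  (forall x, in_perp q W x -> x *m tau = x) ->
  (B == W)%MS ->
  (forall i j : 'I_(2 * r), i != j -> polar q (row i B) (row j B) = 0) ->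
  (forall i, q (row i B) != 0) ->
  exists w : C, [/\ (forall x, iota x * w = w * iota (x *m tau)),
    w * w = ((-1) ^+ r * \prod_(i < 2 * r) q (row i B))%:A & even_part iota w].
Proof.
move=> two Hq iD iZ iQ HW Hp BW oB nB.
pose vf i := \sum_(j < 2 * r | (j : nat) == i) row j B.
have hvf : forall j : 'I_(2 * r), vf j = row j B.
  by move=> j; rewrite /vf (big_pred1 j) // => k; rewrite /= val_eqE.
have ovf : forall i j, (i < 2 * r)%N -> (j < 2 * r)%N -> i != j ->
    polar q (vf i) (vf j) = 0.
  move=> i j hi hj ne; have := oB (Ordinal hi) (Ordinal hj).
  by rewrite -!hvf /=; apply; rewrite -val_eqE.
have nvf : forall i, (i < 2 * r)%N -> q (vf i) != 0.
  by move=> i hi; have := nB (Ordinal hi); rewrite -hvf.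
exists (P iota vf (2 * r)); split.
- move=> x; rewrite (conjP Hq iD iZ iQ ovf nvf) // exprM sqrrN !expr1n scale1r.
  rewrite (tau_formula Hq two oB nB BW HW Hp); congr (_ * iota (x - _)).
  by apply: eq_bigr => i _; rewrite /cf hvf.
- rewrite (sqrP Hq iD iZ iQ ovf nvf) //; congr ((_ * _)%:A).
  by apply: eq_bigr => i _; rewrite hvf.
- exact: evenP.
Qed.

Lemma dir_back (F : fieldType) (n : nat) (q : 'rV[F]_n -> F)
  (C : algType F) (iota : 'rV[F]_n -> C) (tau W : 'M[F]_n) (r : nat) :
  (2%:R : F) != 0 -> is_quadratic_form q ->
  (forall x y, iota (x + y) = iota x + iota y) ->
  (forall (a : F) x, iota (a *: x) = a *: iota x) ->
  (forall x, iota x * iota x = (q x)%:A) ->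
  tau *m tau = 1%:M ->
  (forall w : 'rV[F]_n, (w <= W)%MS -> w *m tau = - w) ->
  (forall x, in_perp q W x -> x *m tau = x) ->
  disc_eq q W (2 * r) ((-1) ^+ r) ->
  exists u : C, [/\ in_Gamma_plus iota u, u * u = 1 & chi_eq iota u tau].
Proof.
move=> two Hq iD iZ iQ tt HW Hp [B [_ BW oB [c [c0 hc]]]].
have nB : forall i, q (row i B) != 0.
  move=> i; apply: contraNneq (mulf_neq0 (sign_nz F r) (expf_neq0 2 c0)) => qi.
  by rewrite -hc (bigD1 i) //= qi mul0r.
have [w [cw ww ew]] := wfacts two Hq iD iZ iQ HW Hp BW oB nB.
have ww' : w * w = (c ^+ 2)%:A by rewrite ww hc mulrA sgn2 mul1r.
have cw' : forall x, w * iota x = iota (x *m tau) * w.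
  by move=> x; rewrite cw -mulmxA tt mulmx1.
set u := c^-1 *: w.
have uu : u * u = 1.
  rewrite /u -scalerAl -scalerAr scalerA ww' scalerA -expr2 exprVn mulVf ?scale1r //.
  by rewrite expf_neq0.
have uxu : forall x, u * iota x * u = iota (x *m tau).
  move=> x; rewrite /u -scalerAl -scalerAl -scalerAr scalerA cw' -mulrA ww'.
  rewrite -scalerAr mulr1 scalerA -expr2 exprVn mulVf ?scale1r //.
  by rewrite expf_neq0.
exists u; split => //.
- split; last by apply: even_scale.
  by exists u; split => // x; exists (x *m tau).
- by exists u; split.
Qed.

Lemma qcoord (F : fieldType) (n : nat) (q : 'rV[F]_n -> F) (Bv : 'M[F]_n) :
  (2%:R : F) != 0 -> is_quadratic_form q -> Bv \in unitmx ->
  (forall i j : 'I_n, i != j -> polar q (row i Bv) (row j Bv) = 0) ->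
  forall x, q x = \sum_i (x *m invmx Bv) 0 i ^+ 2 * q (row i Bv).
Proof.
move=> two Hq BvU oBv x; set c := x *m invmx Bv.
have xc : x = \sum_i c 0 i *: row i Bv by rewrite -mulmx_sum_row /c mulmxKV.
apply: (mulIf two); rewrite mulrC -(polarxx Hq) mulr_suml {1 2}xc.
rewrite (polar_suml Hq); apply: eq_bigr => i _.
rewrite (polarZl Hq) (polar_sumr Hq) (bigD1 i) //= big1 ?addr0.
  by rewrite (polarZr Hq) (polarxx Hq); ring.
by move=> j ji; rewrite (polarZr Hq) polarC oBv ?mulr0 // eq_sym.
Qed.

Lemma dir_fwd (F : fieldType) (n : nat) (q : 'rV[F]_n -> F)
  (C : algType F) (iota : 'rV[F]_n -> C)
  (tau : 'M[F]_n) (W : 'M[F]_n) (r : nat) :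
  (2%:R : F) != 0 ->
  is_quadratic_form q ->
  quad_nondegenerate q ->
  is_clifford_algebra q iota ->
  tau *m tau = 1%:M ->
  nondeg_subspace q W ->
  \rank W = (2 * r)%N ->
  (forall w : 'rV[F]_n, (w <= W)%MS -> w *m tau = - w) ->
  (forall x, in_perp q W x -> x *m tau = x) ->
  (exists u : C, [/\ in_Gamma_plus iota u, u * u = 1 & chi_eq iota u tau]) ->
  disc_eq q W (2 * r) ((-1) ^+ r).
Proof.
move=> two Hq ndq [iD iZ iQ univ] tt ndW rW HW Hp.
move=> [u [[_ eu] uu [v' [uv' v'u ch]]]].
have [B [BW oB nB]] := orth_basis Hq two ndW rW.
have [w [cw ww ew]] := wfacts two Hq iD iZ iQ HW Hp BW oB nB.
have ux : forall y, u * iota y = iota (y *m tau) * u.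
  by move=> y; rewrite -ch -!mulrA v'u mulr1.
have zc : forall x, iota x * (u * w) = (u * w) * iota x.
  move=> x; have : iota x * u = u * iota (x *m tau) by rewrite ux -mulmxA tt mulmx1.
  by rewrite mulrA => ->; rewrite -mulrA cw -mulmxA tt mulmx1 mulrA.
have nd1 : nondeg_subspace q 1%:M.
  by move=> x _ H; apply: ndq => y; apply: H; apply: submx1.
have [Bv [Bv1 oBv nBv]] := orth_basis Hq two nd1 (mxrank1 F n).
set a := fun i => q (row i Bv).
have BvU : Bv \in unitmx.
  by rewrite -row_free_unit /row_free (eqmx_rank Bv1) mxrank1.
pose f := fun x : 'rV[F]_n => \sum_i (x *m invmx Bv) 0 i *: E a i.
have fD : forall x y, f (x + y) = f x + f y.
  by move=> x y; rewrite /f -big_split /=; apply: eq_bigr => i _;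
    rewrite mulmxDl mxE scalerDl.
have fZ : forall (b : F) x, f (b *: x) = b *: f x.
  by move=> b x; rewrite /f scaler_sumr; apply: eq_bigr => i _;
    rewrite -scalemxAl mxE scalerA.
have fQ : forall x, f x * f x = (q x)%:A.
  move=> x; rewrite -mulmxE sqr_lin // (qcoord two Hq BvU oBv x) scalemx1.
  done.
have [g [gD gZ gM g1 [gi _]]] := univ _ f fD fZ fQ.
have fR : forall x j, f x *m R a j = R a j *m f x by move=> x j; apply: R_lin.
have gev : forall e, even_part iota e ->
    par false (g e) /\ forall j, g e *m R a j = R a j *m g e.
  move=> e; elim=> [|x y _ [px cx] _ [py cy]|b y _ [py cy]|y x1 x2 _ [py cy]].
  - by rewrite g1; split; [exact: par1 | move=> j; rewrite mul1mx mulmx1].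
  - rewrite gD; split; first exact: par_add.
    by move=> j; rewrite mulmxDl mulmxDr cx cy.
  - rewrite gZ; split; first exact: par_scale.
    by move=> j; rewrite -scalemxAl cy scalemxAr.
  - rewrite !gM !gi -!mulmxE; split.
      exact: (par_mul (par_mul py (@par_lin _ _ a (fun i => (x1 *m invmx Bv) 0 i)))
        (@par_lin _ _ a (fun i => (x2 *m invmx Bv) 0 i))).
    move=> j; rewrite -!mulmxA fR [f x1 *m _]mulmxA fR -!mulmxA.
    by rewrite [LHS]mulmxA cy -mulmxA.
have [pZ cR] := gev _ (even_mulr eu ew).
have fE : forall i, f (row i Bv) = E a i.
  move=> i; rewrite /f -row_mul mulmxV // (bigD1 i) //= big1 ?addr0.
    by rewrite !mxE eqxx scale1r.
  by move=> j ji; rewrite !mxE eq_sym (negPf ji) scale0r.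
have cE : forall i, g (u * w) *m E a i = E a i *m g (u * w).
  by move=> i; rewrite -fE -gi mulmxE -!gM zc.
have Zs := scalar_model nBv two pZ cE cR.
set mu := g (u * w) _ _ in Zs.
set d := \prod_(i < 2 * r) q (row i B).
set s := (-1) ^+ r * d.
have s0 : s != 0.
  by apply: mulf_neq0; [exact: sign_nz | apply/prodf_neq0 => i _; exact: nB].
have guw : g u *m g w = mu%:M by rewrite mulmxE -gM.
have gww : g w *m g w = s%:M by rewrite mulmxE -gM ww gZ g1 scalemx1.
have guu : g u *m g u = 1%:M by rewrite mulmxE -gM uu g1.
have gu : g u = (mu / s) *: g w.
  have : g u *m (g w *m g w) = (g u *m g w) *m g w by rewrite mulmxA.
  rewrite gww guw mul_mx_scalar mul_scalar_mx => /(congr1 (fun M => s^-1 *: M)).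
  by rewrite scalerA mulVf // scale1r scalerA mulrC.
have : ((mu / s) ^+ 2 * s)%:M = 1%:M :> 'M[F]_((N n).+1).
  rewrite -guu {1 2}gu -scalemxAl -scalemxAr gww !scale_scalar_mx.
  by apply/matrixP => i j; rewrite !mxE; congr (_ *+ _); ring.
move=> /(congr1 (fun M : 'M[F]_((N n).+1) => M 0 0)); rewrite !mxE eqxx !mulr1n => H.
have mu0 : mu != 0.
  apply/eqP => m0; move: H; rewrite m0 mul0r exprS !mul0r => /eqP.
  by rewrite eq_sym oner_eq0.
have smu : s = mu ^+ 2.
  apply: (mulIf (invr_neq0 s0)); rewrite mulfV //.
  by rewrite -H expr_div_n; field; rewrite s0.
exists B; split => //.
  by rewrite /row_free (eqmx_rank BW) rW.
exists mu; split => //; rewrite -smu /s mulrA sgn2 mul1r //.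
Qed.

Unset Implicit Arguments.

Theorem proposition4p1 (F : fieldType) (n : nat) (q : 'rV[F]_n -> F)
  (C : algType F) (iota : 'rV[F]_n -> C)
  (tau : 'M[F]_n) (W : 'M[F]_n) (r : nat) :
  (2%:R : F) != 0 ->
  is_quadratic_form q ->
  quad_nondegenerate q ->
  is_clifford_algebra q iota ->
  in_SO q tau ->
  tau *m tau = 1%:M ->
  nondeg_subspace q W ->
  \rank W = (2 * r)%N ->
  (forall w : 'rV[F]_n, (w <= W)%MS -> w *m tau = - w) ->
  (forall x, in_perp q W x -> x *m tau = x) ->
  (exists u : C, [/\ in_Gamma_plus iota u, u * u = 1 & chi_eq iota u tau])
  <-> disc_eq q W (2 * r) ((-1) ^+ r).
Proof.
move=> two Hq ndq HC _ tt ndW rW HW Hp; split.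
  exact: dir_fwd two Hq ndq HC tt ndW rW HW Hp.
case: HC => iD iZ iQ _.
exact: dir_back two Hq iD iZ iQ tt HW Hp.
Qed.
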